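(* If $(h,a)$ is a solution of the DKP equations, i.e. $\partial_{t_j}h=\partial_x H^{(j)}$ and $\partial_{t_j}a=a\,(\tilde H^{(j)}-H^{(j)})$ for all $j\ge 1$, then $\tilde h=\sigma(h,a)=h+a_x/a$ is a solution of the KP equations: $\partial_{t_j}\tilde h=\partial_x\tilde H^{(j)}$ for all $j\ge1$. Moreover, assuming the KP currents satisfy $\partial_{t_j}H^{(k)}=\partial_{t_k}H^{(j)}$ along the KP flows, the DKP flows commute pairwise: $[\partial_{t_j},\partial_{t_k}]\,a=0$ (and $[\partial_{t_j},\partial_{t_k}]\,h=0$).
   Context: Let $x$ be a space variable; all coefficients below are functions of $x$, and a subscript $x$ denotes $\partial_x$. Let $M$ be the affine space of formal Laurent series $h(z)=z+\sum_{j\ge1}h_j z^{-j}$, $A$ the affine space of formal Laurent series $a(z)=z+\sum_{j\ge0}a_j z^{-j}$, and $N=M\times A$. The Faà di Bruno iterates of $h$ are $h^{(0)}=1$, $h^{(j+1)}=(\partial_x+h)h^{(j)}=\partial_x h^{(j)}+h\,h^{(j)}$ for $j\ge0$. For $j\ge0$, the KP current $H^{(j)}$ is the unique Laurent series of the form $H^{(j)}=h^{(j)}+\sum_{l=0}^{j-2}p^j_l[h]\,h^{(l)}$, with the $p^j_l[h]$ differential polynomials in the $h_i$ (independent of $z$), such that $H^{(j)}=z^j+O(z^{-1})$ as $z\to\infty$ (e.g. $H^{(0)}=1$, $H^{(1)}=h$, $H^{(2)}=h_x+h^2-2h_1$). The KP equations are $\partial_{t_j}h=\partial_x H^{(j)}$.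 The maps $\mu,\sigma:N\to M$ are $\mu(h,a)=h$ and $\sigma(h,a)=h+a_x/a$. The DKP equations on $N$ are $\partial_{t_j}h=\partial_xH^{(j)}$, $\partial_{t_j}a=a(\tilde H^{(j)}-H^{(j)})$, where $\tilde H^{(j)}$ denotes the current $H^{(j)}$ evaluated at $\tilde h=\sigma(h,a)$. *)

(* Defs.v *)
From HB Require Import structures.
From mathcomp Require Import all_boot all_order all_algebra.
From Stdlib Require Import ClassicalEpsilon.
Set Implicit Arguments. Unset Strict Implicit. Unset Printing Implicit Defensive.
Import Order.TTheory GRing.Theory Num.Theory.
Local Open Scope ring_scope.

Section LaurentSeries.
Variable K : comRingType.

(* mkLS d c represents  sum_(i >= 0) c i * z^(d - i)  *)
Record LS := mkLS { ldeg : nat; lc : nat -> K }.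

Definition coef (s : LS) (n : int) : K :=
  if n <= (ldeg s)%:Z then lc s (absz ((ldeg s)%:Z - n)) else 0.

Definition lseq (s t : LS) : Prop := forall n : int, coef s n = coef t n.

Definition lconst (c : K) : LS := mkLS 0 (fun i => if i == 0%N then c else 0).
Definition lzero : LS := lconst 0.
Definition lone : LS := lconst 1.

Definition ladd (s t : LS) : LS :=
  let D := maxn (ldeg s) (ldeg t) in
  mkLS D (fun i => coef s (D%:Z - i%:Z) + coef t (D%:Z - i%:Z)).
Definition lopp (s : LS) : LS := mkLS (ldeg s) (fun i => - lc s i).
Definition lsub (s t : LS) : LS := ladd s (lopp t).
Definition lmul (s t : LS) : LS :=
  mkLS (ldeg s + ldeg t) (fun i => \sum_(k < i.+1) lc s k * lc t (i - k)%N).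

Fixpoint lsumn (n : nat) (f : nat -> LS) : LS :=
  match n with 0%N => lzero | m.+1 => ladd (lsumn m f) (f m) end.

Definition lmap (d : K -> K) (s : LS) : LS := mkLS (ldeg s) (fun i => d (lc s i)).

(* quotient b / a : the series q with a * q = b (used for a monic a) *)
Definition ldiv (b a : LS) : LS :=
  epsilon (inhabits lzero) (fun q => lseq (lmul a q) b).

Definition inM (h : LS) : Prop :=
  coef h 1 = 1 /\ coef h 0 = 0 /\ forall n : int, 1 < n -> coef h n = 0.
Definition inA (a : LS) : Prop :=
  coef a 1 = 1 /\ forall n : int, 1 < n -> coef a n = 0.

Definition isDer (d : K -> K) : Prop :=
  (forall u v, d (u + v) = d u + d v) /\ (forall u v, d (u * v) = d u * v + u * d v).

Variable dx : K -> K.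

Fixpoint fdb (j : nat) (h : LS) : LS :=
  match j with
  | 0%N => lone
  | j'.+1 => ladd (lmap dx (fdb j' h)) (lmul h (fdb j' h))
  end.

Definition isCurrent (j : nat) (h H : LS) : Prop :=
  (exists p : nat -> K,
      lseq H (ladd (fdb j h) (lsumn (j.-1) (fun l => lmul (lconst (p l)) (fdb l h)))))
  /\ (forall n : int, 0 <= n -> coef H n = if n == j%:Z then 1 else 0).

Definition current (j : nat) (h : LS) : LS :=
  epsilon (inhabits lzero) (isCurrent j h).

Definition sigmaN (h a : LS) : LS := ladd h (ldiv (lmap dx a) a).

End LaurentSeries.

(* Main.v *)
Require Import Defs.
From HB Require Import structures.
From mathcomp Require Import all_boot all_order all_algebra zify ring.
From Stdlib Require Import ClassicalEpsilon.
Set Implicit Arguments. Unset Strict Implicit. Unset Printing Implicit Defensive.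
Import Order.TTheory GRing.Theory Num.Theory.
Local Open Scope ring_scope.

Section Lib.
Variable K : comNzRingType.
Local Notation LS := (LS K).
Local Notation "s ~~ t" := (lseq s t) (at level 70).

Lemma lseq_refl (s : LS) : s ~~ s. Proof. by []. Qed.
Lemma lseq_sym (s t : LS) : s ~~ t -> t ~~ s. Proof. by move=> H n; rewrite H. Qed.
Lemma lseq_trans (s t u : LS) : s ~~ t -> t ~~ u -> s ~~ u.
Proof. by move=> H1 H2 n; rewrite H1 H2. Qed.

Lemma coef_gt (s : LS) (x : int) : (ldeg s)%:Z < x -> coef s x = 0.
Proof. by rewrite /coef => H; case: ifP => //; lia. Qed.

Lemma coef_lcE (s : LS) (x : int) (k : nat) : x = (ldeg s)%:Z - k%:Z -> coef s x = lc s k.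
Proof.
move=> ->; rewrite /coef; case: ifP; last lia.
move=> _; congr (lc s _); lia.
Qed.

Lemma coef_ladd (s t : LS) n : coef (ladd s t) n = coef s n + coef t n.
Proof.
rewrite {1}/coef /=; case: ifP => H.
  congr (_ + _); congr (coef _ _); lia.
by rewrite !coef_gt ?addr0 //; lia.
Qed.

Lemma coef_lopp (s : LS) n : coef (lopp s) n = - coef s n.
Proof. by rewrite /coef /=; case: ifP => //; rewrite oppr0. Qed.

Lemma coef_lsub (s t : LS) n : coef (lsub s t) n = coef s n - coef t n.
Proof. by rewrite /lsub coef_ladd coef_lopp. Qed.

Lemma coef_lmap d (s : LS) n : d 0 = 0 -> coef (lmap d s) n = d (coef s n).
Proof. by move=> d0; rewrite /coef /=; case: ifP. Qed.

Lemma coef_lzero n : coef (lzero K) n = 0 :> K.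
Proof. by rewrite /coef /=; case: ifP => //; case: (absz _). Qed.

Lemma lseq_lc (s t : LS) : ldeg s = ldeg t -> (forall i, lc s i = lc t i) -> s ~~ t.
Proof. by move=> Hd Hl n; rewrite /coef Hd Hl. Qed.

Lemma sum_trunc (G : nat -> K) (m N : nat) : (m <= N)%N ->
  (forall j, (m <= j)%N -> G j = 0) -> \sum_(j < N) G j = \sum_(j < m) G j.
Proof.
move=> HmN HG; rewrite (big_ord_widen _ _ HmN) [RHS]big_mkcond /=.
by apply: eq_bigr => i _; case: ifP => // /negbT; rewrite -leqNgt => /HG ->.
Qed.

Lemma coef_lmulF (s t : LS) n (N : nat) :
  (ldeg s)%:Z + (ldeg t)%:Z - n < N%:Z ->
  coef (lmul s t) n = \sum_(k < N) coef s ((ldeg s)%:Z - k%:Z) * coef t (n - (ldeg s)%:Z + k%:Z).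
Proof.
move=> HN; rewrite {1}/coef /=; case: ifP => Hn.
  set i := absz _.
  have Hi : (ldeg s)%:Z + (ldeg t)%:Z - n = i%:Z by rewrite /i; lia.
  rewrite (@sum_trunc (fun k : nat => coef s ((ldeg s)%:Z - k%:Z) * coef t (n - (ldeg s)%:Z + k%:Z)) i.+1); last 2 first.
  - lia.
  - move=> j Hj; rewrite (@coef_gt t) ?mulr0 //; lia.
  apply: eq_bigr => k _.
  rewrite (@coef_lcE s _ k) //. rewrite (@coef_lcE t _ (i - k)) //.
  have := ltn_ord k; lia.
rewrite big1 // => k _; rewrite (@coef_gt t) ?mulr0 //; lia.
Qed.


Definition PL (L : nat) (s : LS) : {poly K} := \poly_(k < L) lc s k.

Lemma lc_lmulP (L : nat) (s t : LS) k : (k < L)%N ->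
  lc (lmul s t) k = (PL L s * PL L t)`_k.
Proof.
move=> Hk; rewrite coefM /=; apply: eq_bigr => j _.
rewrite !coef_poly; have := ltn_ord j => Hj.
rewrite ifT; last lia. by rewrite ifT; last lia.
Qed.

Lemma lmulC (s t : LS) : lmul s t ~~ lmul t s.
Proof.
apply: lseq_lc; first by rewrite /= addnC.
by move=> i; rewrite !(@lc_lmulP i.+1) // mulrC.
Qed.

Lemma lmulA (s t u : LS) : lmul (lmul s t) u ~~ lmul s (lmul t u).
Proof.
apply: lseq_lc; first by rewrite /= addnA.
move=> i. rewrite !(@lc_lmulP i.+1) //.
have E1 : forall k, (k < i.+1)%N -> (PL i.+1 (lmul s t))`_k = (PL i.+1 s * PL i.+1 t)`_k.
  by move=> k Hk; rewrite coef_poly Hk (@lc_lmulP i.+1).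
have E2 : forall k, (k < i.+1)%N -> (PL i.+1 (lmul t u))`_k = (PL i.+1 t * PL i.+1 u)`_k.
  by move=> k Hk; rewrite coef_poly Hk (@lc_lmulP i.+1).
transitivity (((PL i.+1 s * PL i.+1 t) * PL i.+1 u)`_i).
  rewrite !coefM; apply: eq_bigr => j _; have := ltn_ord j => Hj.
  by rewrite E1.
rewrite -mulrA.
rewrite !coefM; apply: eq_bigr => j _; have := ltn_ord j => Hj.
rewrite E2 //; lia.
Qed.

Lemma big_N (s t : LS) (n : int) : exists N : nat, forall x : nat, (x <= ldeg t)%N ->
   (ldeg s)%:Z + x%:Z - n < N%:Z.
Proof.
exists (absz ((ldeg s)%:Z + (ldeg t)%:Z - n)%R).+1 => x Hx; lia.
Qed.

Lemma lmulr_eq (s t t' : LS) : t ~~ t' -> lmul s t ~~ lmul s t'.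
Proof.
move=> H n. have [N HN] := big_N s (lmul t t') n.
rewrite (@coef_lmulF s t n N); last by apply: HN => /=; lia.
rewrite (@coef_lmulF s t' n N); last by apply: HN => /=; lia.
by apply: eq_bigr => k _; rewrite H.
Qed.

Lemma lmull_eq (s s' t : LS) : s ~~ s' -> lmul s t ~~ lmul s' t.
Proof.
move=> H; apply: lseq_trans (lmulC _ _) _; apply: lseq_trans (lmulC _ _).
exact: lmulr_eq.
Qed.

Lemma lmulDr (s t u : LS) : lmul s (ladd t u) ~~ ladd (lmul s t) (lmul s u).
Proof.
move=> n. have [N HN] := big_N s (lmul t u) n.
rewrite coef_ladd.
rewrite (@coef_lmulF s _ n N); last by apply: HN => /=; lia.
rewrite (@coef_lmulF s t n N); last by apply: HN => /=; lia.
rewrite (@coef_lmulF s u n N); last by apply: HN => /=; lia.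
by rewrite -big_split /=; apply: eq_bigr => k _; rewrite coef_ladd mulrDr.
Qed.

Lemma ladd_eq (s s' t t' : LS) : s ~~ s' -> t ~~ t' -> ladd s t ~~ ladd s' t'.
Proof. by move=> H1 H2 n; rewrite !coef_ladd H1 H2. Qed.


Lemma der0 (d : K -> K) : isDer d -> d 0 = 0.
Proof.
case=> Ha _; apply: (addrI (d 0)); by rewrite addr0 -Ha addr0.
Qed.

Lemma der1 (d : K -> K) : isDer d -> d 1 = 0.
Proof.
case=> _ Hm; apply: (addrI (d 1)); have := Hm 1 1; rewrite !mulr1 mul1r => E.
by rewrite addr0 -E.
Qed.

Lemma derN (d : K -> K) : isDer d -> forall u, d (- u) = - d u.
Proof.
move=> Hd u; have [Ha _] := Hd; apply/eqP; rewrite -subr_eq0 opprK -Ha addNr.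
by rewrite der0.
Qed.

Lemma lmap_eq (d : K -> K) (s t : LS) : d 0 = 0 -> s ~~ t -> lmap d s ~~ lmap d t.
Proof. by move=> d0 H n; rewrite !coef_lmap // H. Qed.

Lemma lmapD (d : K -> K) (s t : LS) : isDer d -> lmap d (ladd s t) ~~ ladd (lmap d s) (lmap d t).
Proof.
move=> Hd n; have d0 := der0 Hd; have [Ha _] := Hd.
by rewrite coef_ladd !coef_lmap // coef_ladd Ha.
Qed.

Lemma lmapB (d : K -> K) (s t : LS) : isDer d -> lmap d (lsub s t) ~~ lsub (lmap d s) (lmap d t).
Proof.
move=> Hd n; have d0 := der0 Hd; have [Ha _] := Hd.
by rewrite coef_lsub !coef_lmap // coef_lsub Ha derN.
Qed.

Lemma der_sum (d : K -> K) : isDer d -> forall (m : nat) (F : 'I_m -> K),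
  d (\sum_(i < m) F i) = \sum_(i < m) d (F i).
Proof.
move=> Hd m F; have [Ha _] := Hd.
exact: (big_morph d Ha (der0 Hd)).
Qed.

Lemma lmapM (d : K -> K) (s t : LS) : isDer d ->
  lmap d (lmul s t) ~~ ladd (lmul (lmap d s) t) (lmul s (lmap d t)).
Proof.
move=> Hd n; have d0 := der0 Hd; have [_ Hm] := Hd.
rewrite coef_ladd coef_lmap // /coef /=.
case: ifP => _; last by rewrite d0 addr0.
rewrite der_sum // -big_split /=; apply: eq_bigr => k _; exact: Hm.
Qed.

Lemma lmap_comm (d1 d2 : K -> K) (s : LS) : (forall u, d1 (d2 u) = d2 (d1 u)) ->
  lmap d1 (lmap d2 s) ~~ lmap d2 (lmap d1 s).
Proof. by move=> H; apply: lseq_lc => // i /=. Qed.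


Lemma coef_amul (a Y : LS) n (N : nat) : inA a -> (ldeg Y)%:Z - n < N%:Z ->
  coef (lmul a Y) n = coef Y (n - 1) + \sum_(j < N) coef a (- j%:Z) * coef Y (n + j%:Z).
Proof.
case=> Ha1 Ha HN.
have Hda : (0 < ldeg a)%N.
  case: (posnP (ldeg a)) => // H0; move: Ha1; rewrite coef_gt; last by rewrite H0.
  by move=> /esym/eqP; rewrite oner_eq0.
rewrite (@coef_lmulF a Y n (ldeg a + N)); last lia.
rewrite big_split_ord /=; congr (_ + _).
  pose G := fun i : nat => coef a ((ldeg a)%:Z - i%:Z) * coef Y (n - (ldeg a)%:Z + i%:Z).
  transitivity (\sum_(i < ldeg a) G i); first by apply: eq_bigr.
  have Hsum : forall m, m = (ldeg a).-1.+1 -> \sum_(i < m) G i = G (ldeg a).-1.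
    move=> m ->; rewrite big_ord_recr /= big1 ?add0r // => i _.
    rewrite /G Ha ?mul0r //; have := ltn_ord i; lia.
  rewrite Hsum; last lia.
  rewrite /G (_ : (ldeg a)%:Z - ((ldeg a).-1)%:Z = 1); last lia.
  rewrite Ha1 mul1r; congr (coef Y _); lia.
apply: eq_bigr => j _; congr (coef a _ * coef Y _); lia.
Qed.

Lemma amul_cancel (a Y Z : LS) (m : int) : inA a ->
  (forall n, m < n -> coef (lmul a Y) n = coef (lmul a Z) n) ->
  forall n, m <= n -> coef Y n = coef Z n.
Proof.
move=> Ha H.
suff: forall k : nat, forall n, m <= n -> (maxn (ldeg Y) (ldeg Z))%:Z - n < k%:Z ->
          coef Y n = coef Z n.
  move=> Hk n Hn; apply: (Hk (absz ((maxn (ldeg Y) (ldeg Z))%:Z - n)%R).+1) => //; lia.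
elim=> [|k IH] n Hmn Hk.
  by rewrite !coef_gt //; lia.
have := H (n + 1); rewrite (@coef_amul a Y _ k.+1) //; last lia.
rewrite (@coef_amul a Z _ k.+1) //; last lia.
rewrite addrK; move=> E.
have Es : \sum_(j < k.+1) coef a (- j%:Z) * coef Y (n + 1 + j%:Z) =
          \sum_(j < k.+1) coef a (- j%:Z) * coef Z (n + 1 + j%:Z).
  apply: eq_bigr => j _; rewrite IH //; lia.
rewrite Es in E; apply: (addIr _ (E _)); lia.
Qed.

Variable dx : K -> K.
Hypothesis Hdx : isDer dx.

Section Quot.
Variable a : LS.
Let al := coef a.
Let bl := coef (lmap dx a).

Definition qstep (l : seq K) (m' : nat) : K :=
  if m' is p.+1 then bl (- p%:Z) - \sum_(j < p) al (- j%:Z) * nth 0 l (p - j) else 0.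

Fixpoint qlist (m : nat) : seq K :=
  match m with 0%N => [::] | m'.+1 => rcons (qlist m') (qstep (qlist m') m') end.

Definition qfun (m : nat) : K := nth 0 (qlist m.+1) m.

Lemma qlist_size m : size (qlist m) = m.
Proof. by elim: m => //= m IH; rewrite size_rcons IH. Qed.

Lemma qlist_nth m i : (i < m)%N -> nth 0 (qlist m) i = qfun i.
Proof.
elim: m => // m IH Hi.
case: (ltngtP i m) => [Him||Him]; first by rewrite /= nth_rcons qlist_size Him IH.
  lia.
by rewrite Him.
Qed.

Lemma qfun0 : qfun 0 = 0.
Proof. by []. Qed.

Lemma qfunS p : qfun p.+1 = bl (- p%:Z) - \sum_(j < p) al (- j%:Z) * qfun (p - j).
Proof.
rewrite /qfun (_ : qlist p.+2 = rcons (qlist p.+1) (qstep (qlist p.+1) p.+1)) // nth_rcons qlist_size ltnn eqxx /qstep.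
congr (_ - _); apply: eq_bigr => j _; rewrite qlist_nth //; lia.
Qed.

Definition qser : LS := mkLS 0 qfun.

Lemma coef_qser_nonneg x : 0 <= x -> coef qser x = 0.
Proof.
move=> Hx; case: (ltrP 0 x) => H; first by rewrite coef_gt.
have -> : x = 0 by lia.
by rewrite (@coef_lcE _ _ 0).
Qed.

Lemma qser_spec : inA a -> lseq (lmul a qser) (lmap dx a).
Proof.
move=> Ha n.
rewrite (@coef_amul a qser n (absz n).+1) //; last by rewrite /=; lia.
case: (ltrP 0 n) => Hn.
  rewrite coef_qser_nonneg; last lia.
  rewrite big1 ?addr0; last by move=> j _; rewrite coef_qser_nonneg ?mulr0 //; lia.
  rewrite coef_lmap ?der0 //.
  case: Ha => Ha1 Ha.
  case: (ltrP 1 n) => H1; first by rewrite Ha ?der0.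
  by rewrite (_ : n = 1) ?Ha1 ?der1 //; lia.
set m := absz n.
rewrite (@coef_lcE qser (n - 1) m.+1); last by rewrite /m /=; lia.
rewrite (@sum_trunc (fun j : nat => coef a (- j%:Z) * coef qser (n + j%:Z)) m) //; last first.
  by move=> j Hj; rewrite coef_qser_nonneg ?mulr0 //; rewrite /m in Hj; lia.
rewrite /= qfunS.
rewrite (_ : \sum_(j < m) coef a (- j%:Z) * coef qser (n + j%:Z) = \sum_(j < m) al (- j%:Z) * qfun (m - j)); last first.
  apply: eq_bigr => j _; rewrite (@coef_lcE qser _ (m - j)) //.
  have := ltn_ord j; rewrite /= /m; lia.
rewrite subrK /bl; congr (coef _ _); rewrite /m; lia.
Qed.


End Quot.

Lemma ldiv_spec (a : LS) : inA a -> lseq (lmul a (ldiv (lmap dx a) a)) (lmap dx a).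
Proof. move=> Ha; rewrite /ldiv; apply: (epsilon_spec (inhabits (lzero K)) (fun q => lseq (lmul a q) (lmap dx a))); exists (qser a); exact: qser_spec. Qed.

Lemma ldiv_nonneg (a : LS) : inA a -> forall n, 0 <= n -> coef (ldiv (lmap dx a) a) n = 0.
Proof.
move=> Ha n Hn.
rewrite (@amul_cancel a _ (lzero K) 0 Ha) ?coef_lzero // => p Hp.
rewrite ldiv_spec // (@coef_amul a (lzero K) p 0) //; last by rewrite /=; lia.
rewrite big_ord0 coef_lzero addr0 coef_lmap ?der0 //.
case: (Ha) => Ha1 Ha'.
case: (ltrP 1 p) => H1; first by rewrite Ha' ?der0.
by rewrite (_ : p = 1) ?Ha1 ?der1 //; lia.
Qed.

Lemma dtq (a T : LS) (d : K -> K) : isDer d -> (forall u, dx (d u) = d (dx u)) -> inA a ->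
  lmap d a ~~ lmul a T -> lmap d (ldiv (lmap dx a) a) ~~ lmap dx T.
Proof.
move=> Hd Hc Ha HT.
set q := ldiv (lmap dx a) a; set b := lmap dx a.
suff S : lmul a (lmap d q) ~~ lmul a (lmap dx T).
  by move=> n; apply: (@amul_cancel a _ _ n Ha) => // p _; apply: S.
have E0 : lmul a q ~~ b by apply: ldiv_spec.
have E1 := lmap_eq (der0 Hd) E0.
have E2 := lmapM a q Hd.
have E3 : lmap d b ~~ lmap dx (lmap d a) by apply: lmap_comm => u; rewrite Hc.
have E4 := lmap_eq (der0 Hdx) HT.
have E5 := lmapM a T Hdx.
have E6 : lmul (lmap d a) q ~~ lmul b T.
  apply: lseq_trans (lmull_eq _ HT) _.
  apply: lseq_trans (lmulA _ _ _) _.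
  apply: lseq_trans (lmulr_eq _ (lmulC _ _)) _.
  apply: lseq_trans (lseq_sym (lmulA _ _ _)) _.
  exact: lmull_eq.
move=> n.
have := E1 n; rewrite E2 E3 E4 E5 !coef_ladd E6 => /addrI.
by rewrite -/b.
Qed.

Lemma expand2 (a Tj Tk : LS) (dj dk : K -> K) : isDer dj ->
  lmap dk a ~~ lmul a Tk -> lmap dj a ~~ lmul a Tj ->
  lmap dj (lmap dk a) ~~ ladd (lmul (lmul a Tj) Tk) (lmul a (lmap dj Tk)).
Proof.
move=> Hj Hk Hjj.
apply: lseq_trans (lmap_eq (der0 Hj) Hk) _.
apply: lseq_trans (lmapM _ _ Hj) _.
apply: ladd_eq => //; exact: lmull_eq.
Qed.

Lemma comm_a (a Tj Tk : LS) (dj dk : K -> K) : isDer dj -> isDer dk ->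
  lmap dj a ~~ lmul a Tj -> lmap dk a ~~ lmul a Tk -> lmap dj Tk ~~ lmap dk Tj ->
  lmap dj (lmap dk a) ~~ lmap dk (lmap dj a).
Proof.
move=> Hj Hk Haj Hak HT.
apply: lseq_trans (expand2 Hj Hak Haj) _.
apply: lseq_sym; apply: lseq_trans (expand2 Hk Haj Hak) _.
apply: ladd_eq; last exact: lmulr_eq (lseq_sym HT).
apply: lseq_trans (lmulA _ _ _) _.
apply: lseq_trans (lmulr_eq _ (lmulC _ _)) _.
exact: lseq_sym (lmulA _ _ _).
Qed.

End Lib.

Theorem mainTheorem1 (K : comRingType) (dx : K -> K) (dt : nat -> K -> K)
  (h a : LS K) :
  isDer dx ->
  (forall j, isDer (dt j)) ->
  (forall j u, dx (dt j u) = dt j (dx u)) ->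
  inM h -> inA a ->
  (* (h, a) solves the DKP equations *)
  (forall j : nat, (1 <= j)%N ->
     lseq (lmap (dt j) h) (lmap dx (current dx j h))) ->
  (forall j : nat, (1 <= j)%N ->
     lseq (lmap (dt j) a)
          (lmul a (lsub (current dx j (sigmaN dx h a)) (current dx j h)))) ->
  (* sigma(h, a) solves KP *)
  (forall j : nat, (1 <= j)%N ->
     lseq (lmap (dt j) (sigmaN dx h a)) (lmap dx (current dx j (sigmaN dx h a))))
  /\
  (* if the KP currents commute along the KP flows, the DKP flows commute *)
  ((forall (j k : nat) (g : LS K), (1 <= j)%N -> (1 <= k)%N -> inM g ->
      lseq (lmap (dt j) g) (lmap dx (current dx j g)) ->
      lseq (lmap (dt k) g) (lmap dx (current dx k g)) ->
      lseq (lmap (dt j) (current dx k g)) (lmap (dt k) (current dx j g))) ->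
   forall j k : nat, (1 <= j)%N -> (1 <= k)%N ->
     lseq (lmap (dt j) (lmap (dt k) a)) (lmap (dt k) (lmap (dt j) a)) /\
     lseq (lmap (dt j) (lmap (dt k) h)) (lmap (dt k) (lmap (dt j) h))).
Proof.
move=> Hdx Hdt Hc HM HA Hh Ha.
set th := sigmaN dx h a.
have Hq : forall j, (1 <= j)%N -> lseq (lmap (dt j) (ldiv (lmap dx a) a))
      (lmap dx (lsub (current dx j th) (current dx j h))).
  move=> j Hj; apply: dtq => //; exact: Ha.
have P1 : forall j : nat, (1 <= j)%N -> lseq (lmap (dt j) th) (lmap dx (current dx j th)).
  move=> j Hj n; change (coef (lmap (dt j) (ladd h (ldiv (lmap dx a) a))) n = coef (lmap dx (current dx j th)) n).
  rewrite (lmapD _ _ (Hdt j)) coef_ladd (Hh j Hj n) (Hq j Hj n).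
  rewrite !coef_lmap ?(der0 Hdx) // coef_lsub.
  case: Hdx => Hadd _; rewrite -Hadd; congr (dx _); by rewrite addrC subrK.
split => // Hcomm j k Hj Hk.
have HMth : inM th.
  case: HM => H1 [H0 Hgt].
  have Hq0 := ldiv_nonneg Hdx HA.
  rewrite /inM /th /sigmaN !coef_ladd !Hq0 ?addr0 //; split => //; split => //.
  move=> n Hn; rewrite coef_ladd Hq0 ?Hgt ?addr0 //; lia.
have HMh := HM.
split.
  apply: comm_a; [exact: Hdt | exact: Hdt | exact: Ha | exact: Ha |].
  apply: lseq_trans (lmapB _ _ (Hdt j)) _.
  apply: lseq_sym; apply: lseq_trans (lmapB _ _ (Hdt k)) _.
  move=> n; rewrite !coef_lsub.
  rewrite (Hcomm j k th) ?(Hcomm j k h) //; by [apply: P1 | apply: Hh].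
apply: lseq_trans (lmap_eq (der0 (Hdt j)) (Hh k Hk)) _.
apply: lseq_trans (lmap_comm _ _) _; first by move=> u; rewrite Hc.
apply: lseq_trans (lmap_eq (der0 Hdx) (Hcomm j k h Hj Hk HM (Hh j Hj) (Hh k Hk))) _.
apply: lseq_trans (lmap_comm _ _) _; first by move=> u; rewrite Hc.
exact: lmap_eq (der0 (Hdt k)) (lseq_sym (Hh j Hj)).
Qed.
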